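(* Let $n\ge3$ and $j\ge 0$. Then $\mathcal{N}_j=N_{\mathcal{B}}(\mathbb{Z}\mathcal{N}_{j-1})$, where $N_{\mathcal{B}}(\mathbb{Z}\mathcal{N}_{j-1})=\{b\in\mathcal{B}: [b,m]\in\mathbb{Z}\mathcal{N}_{j-1}\text{ for all } m\in\mathbb{Z}\mathcal{N}_{j-1}\}$ and $\mathbb{Z}\mathcal{N}_{j-1}$ denotes the $\mathbb{Z}$-span of $\mathcal{N}_{j-1}$ in $\mathfrak{L}(n)$.
   Context: Fix an integer $n\ge 3$. A partition is a sequence $\Lambda=(\lambda_j)_{j\ge1}$ of non-negative integers with finite support; $\mathrm{wt}(\Lambda)=\sum_j j\lambda_j$; $\mathrm{Part}(k)$ is the set of partitions with $\lambda_j=0$ for $j>k$. Write $x^\Lambda=\prod_j x_j^{\lambda_j}$, $\deg(x^\Lambda)=\sum_j\lambda_j$, and let $\partial_k$ be the partial derivative with respect to $x_k$. $\mathfrak{L}(n)$ is the free $\mathbb{Z}$-module with basis $\mathcal{B}=\{x^\Lambda\partial_k : 1\le k\le n,\ \Lambda\in\mathrm{Part}(k-1)\}$, a Lie ring with bracket defined on basis elements by $[x^\Lambda\partial_k,x^\Theta\partial_j]=\partial_j(x^\Lambda)x^\Theta\partial_k$ if $j<k$, $-x^\Lambda\partial_k(x^\Theta)\partial_j$ if $j>k$, $0$ if $j=k$, extended bilinearly. For an integer $i\ge-1$, let $r_i\in\{1,\dots,n-1\}$ with $i\equiv r_i\pmod{n-1}$ and $h_i=\lfloor (i-1)/(n-1)\rfloor+1$.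 Define $\mathrm{WD}(x^\Lambda\partial_k)=\mathrm{wt}(\Lambda)-\deg(x^\Lambda)+n-k$ and $\mathrm{lev}_i(x^\Lambda\partial_k)=h_i\,\mathrm{WD}(x^\Lambda\partial_k)+\deg(x^\Lambda)-1$. For $i\ge-1$, $\mathcal{N}_i=\{b\in\mathcal{B}: \mathrm{lev}_j(b)\le j\text{ for some integer } -1\le j\le i\}$. *)

(* Defs.v *)
From mathcomp Require Import all_boot all_order all_algebra.
Set Implicit Arguments. Unset Strict Implicit. Unset Printing Implicit Defensive.
Import Order.TTheory GRing.Theory Num.Theory.

(* A candidate basis element x^Lambda d_k is encoded as a pair (k, lam)
   where lam = [:: lambda_1; ...; lambda_(k-1)] (so Lambda \in Part(k-1)
   is encoded by its first k-1 entries, the rest being 0). *)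
Definition bas := (nat * seq nat)%type.

Definition is_basis (n : nat) (b : bas) : bool :=
  [&& 1 <= b.1, b.1 <= n & size b.2 == b.1.-1].

Definition lamj (lam : seq nat) (i : nat) : nat := nth 0 lam i.-1.

Definition wt (lam : seq nat) : nat := \sum_(i < size lam) i.+1 * nth 0 lam i.
Definition deg (lam : seq nat) : nat := sumn lam.

Definition WD (n : nat) (b : bas) : int :=
  (Posz (wt b.2) - Posz (deg b.2) + Posz n - Posz b.1)%R.

Definition hh (n : nat) (i : int) : int := (divz (i - 1) (Posz n.-1) + 1)%R.

Definition lev (n : nat) (i : int) (b : bas) : int :=
  (hh n i * WD n b + Posz (deg b.2) - 1)%R.

Definition Nset (n : nat) (i : int) (b : bas) : Prop :=
  is_basis n b /\ exists j : int, (-1 <= j)%R /\ (j <= i)%R /\ (lev n j b <= j)%R.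

(* x^Lambda * x^Theta * x_l^{-1} restricted to x_1..x_(len): exponent sequence *)
Definition mon_shift (lam th : seq nat) (l len : nat) : seq nat :=
  mkseq (fun i => nth 0 lam i + nth 0 th i - (i == l.-1)) len.

(* Bracket of two basis elements: an integer times a basis element.
   [x^L d_k, x^T d_j] = d_j(x^L) x^T d_k      if j < k
                      = - x^L d_k(x^T) d_j    if j > k
                      = 0                     if j = k *)
Definition brb (b c : bas) : int * bas :=
  let: (k, lam) := b in let: (j, th) := c in
  if j < k then (Posz (lamj lam j), (k, mon_shift lam th j k.-1))
  else if k < j then ((- Posz (lamj th k))%R, (j, mon_shift lam th k j.-1))
  else (0%R, b).

(* Elements of L(n) are written as formal finite Z-combinations
   sum_i c_i b_i, encoded as a list of pairs (c_i, b_i); their value is the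
   coefficient function B -> Z below (two formal sums denote the same element
   iff their coefficient functions agree). *)
Definition fsum := seq (int * bas).

Definition coef (s : fsum) (e : bas) : int := (\sum_(p <- s | p.2 == e) p.1)%R.

Definition brs (b : bas) (s : fsum) : fsum :=
  map (fun p => ((p.1 * (brb b p.2).1)%R, (brb b p.2).2)) s.

Definition over (S : bas -> Prop) (s : fsum) : Prop := forall p, p \in s -> S p.2.

Definition in_span (S : bas -> Prop) (m : bas -> int) : Prop :=
  exists t : fsum, over S t /\ forall e, coef t e = m e.

Definition normB (n : nat) (S : bas -> Prop) (b : bas) : Prop :=
  is_basis n b /\ forall t : fsum, over S t -> in_span S (coef (brs b t)).

(* Main.v *)
Require Import Defs.
From mathcomp Require Import all_boot all_order all_algebra.
From mathcomp Require Import zify.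
From Stdlib Require Import Classical_Prop.
Import Order.TTheory GRing.Theory Num.Theory.

Module MHh.
Set Implicit Arguments. Unset Strict Implicit. Unset Printing Implicit Defensive.

Section H.
Local Open Scope ring_scope.

Lemma hh_bounds n (i : int) : (3 <= n)%N ->
  (hh n i - 1) * Posz n.-1 <= i - 1 /\ i - 1 < hh n i * Posz n.-1.
Proof.
move=> hn; rewrite /hh.
have m0 : Posz n.-1 != 0 by apply/eqP; lia.
have := divz_eq (i - 1) (Posz n.-1).
have := modz_ge0 (i - 1) m0.
have : (0 < Posz n.-1) by lia.
move/(ltz_pmod (i - 1)).
set q := divz _ _; set r := modz _ _ => h1 h2 h3.
split; nia.
Qed.

Lemma hh_ge0 n i : (3 <= n)%N -> -1 <= i -> 0 <= hh n i.
Proof. move=> hn hi; have [h1 h2] := hh_bounds i hn; nia. Qed.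

Lemma hh_le n i : (3 <= n)%N -> i <= hh n i * Posz n.-1.
Proof. move=> hn; have [h1 h2] := hh_bounds i hn; nia. Qed.

Lemma hh_mono n i i' : (3 <= n)%N -> i <= i' -> hh n i <= hh n i'.
Proof.
move=> hn hi; have [h1 h2] := hh_bounds i hn; have [h3 h4] := hh_bounds i' hn; nia.
Qed.

Lemma hh_pred n i : (3 <= n)%N -> hh n i <= hh n (i - 1) + 1.
Proof.
move=> hn; have [h1 h2] := hh_bounds i hn; have [h3 h4] := hh_bounds (i - 1) hn; nia.
Qed.

Lemma hh_m1 n : (3 <= n)%N -> hh n (-1) = 0.
Proof. move=> hn; have [h1 h2] := hh_bounds (-1) hn; nia. Qed.

Lemma hh_0 n : (3 <= n)%N -> hh n 0 = 0.
Proof. move=> hn; have [h1 h2] := hh_bounds 0 hn; nia. Qed.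

Lemma hh_pos n i : (3 <= n)%N -> 1 <= i -> 1 <= hh n i.
Proof. move=> hn hi; have [h1 h2] := hh_bounds i hn; nia. Qed.

Lemma hh_block n (g : int) : (3 <= n)%N -> 1 <= g -> hh n ((g - 1) * Posz n.-1) = g - 1.
Proof. move=> hn hg; have [h1 h2] := hh_bounds ((g - 1) * Posz n.-1) hn; nia. Qed.

Lemma hh_blockle n (j : int) : (3 <= n)%N -> (hh n j - 1) * Posz n.-1 <= j - 1.
Proof. move=> hn; have [h1 h2] := hh_bounds j hn; nia. Qed.

End H.

End MHh.
Import MHh.

Module MB.
Set Implicit Arguments. Unset Strict Implicit. Unset Printing Implicit Defensive.

Lemma wt_ext len lam : (size lam <= len)%N ->
  wt lam = \sum_(i < len) i.+1 * nth 0 lam i.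
Proof.
move=> hs; rewrite /wt (big_ord_widen _ (fun i => i.+1 * nth 0 lam i) hs).
rewrite big_mkcond /=; apply: eq_bigr => i _.
case: ifP => // /negbT; rewrite -leqNgt => h; by rewrite nth_default // muln0.
Qed.

Lemma deg_ext len lam : (size lam <= len)%N ->
  deg lam = \sum_(i < len) nth 0 lam i.
Proof.
rewrite /deg; elim: lam len => [|x l IH] len.
- by move=> _; rewrite big1 // => i _; rewrite nth_nil.
- case: len => [//|len] /= hs; by rewrite big_ord_recl /= (IH len).
Qed.

Lemma sum_ind len p (F : nat -> nat) : (p < len)%N ->
  \sum_(i < len) (nat_of_ord i == p) * F i = F p.
Proof.
move=> hp; rewrite (bigD1 (Ordinal hp)) //= eqxx mul1n big1 ?addn0 // => i hi.
have -> : (nat_of_ord i == p) = false.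
  by apply/negbTE; apply: contra hi => /eqP h; apply/eqP; apply: val_inj.
by rewrite mul0n.
Qed.

Lemma wt_ge_deg lam : (deg lam <= wt lam)%N.
Proof.
rewrite (deg_ext (leqnn _)) /wt; apply: leq_sum => i _; rewrite mulSn; lia.
Qed.

Lemma wt_le lam : (wt lam <= size lam * deg lam)%N.
Proof.
rewrite (deg_ext (leqnn _)) /wt big_distrr /=; apply: leq_sum => i _.
by apply: leq_mul.
Qed.

Lemma ms_sums lam th p len : (size lam <= len)%N -> (size th <= len)%N -> (p < len)%N ->
  (0 < nth 0 lam p + nth 0 th p)%N ->
  deg (mkseq (fun i => nth 0 lam i + nth 0 th i - (i == p)) len) + 1 = deg lam + deg th /\
  wt (mkseq (fun i => nth 0 lam i + nth 0 th i - (i == p)) len) + p.+1 = wt lam + wt th.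
Proof.
move=> hl ht hp hpos.
set s := mkseq _ _.
have hs : size s = len by rewrite size_mkseq.
have key : forall i : 'I_len, nth 0 s i + (nat_of_ord i == p) = nth 0 lam i + nth 0 th i.
  move=> i; rewrite nth_mkseq //; case: eqP => [->|_]; lia.
split.
- rewrite (deg_ext (eq_leq hs)) (deg_ext hl) (deg_ext ht) -big_split /=.
  have -> : 1 = \sum_(i < len) (nat_of_ord i == p) * 1 by rewrite (sum_ind (fun _ => 1) hp).
  rewrite -big_split /=; apply: eq_bigr => i _; rewrite muln1 key //.
- rewrite (wt_ext (eq_leq hs)) (wt_ext hl) (wt_ext ht) -big_split /=.
  rewrite -(sum_ind (fun i => i.+1) hp) -big_split /=.
  apply: eq_bigr => i _; rewrite -mulnDr; rewrite [(_ == _) * _]mulnC -mulnDr key //.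
Qed.

End MB.
Import MB.

Module MC.
Set Implicit Arguments. Unset Strict Implicit. Unset Printing Implicit Defensive.

Lemma brb_grade n b c : is_basis n b -> is_basis n c -> (brb b c).1 != 0%R ->
  [/\ is_basis n (brb b c).2,
      WD n (brb b c).2 = (WD n b + WD n c - Posz n.-1)%R &
      deg (brb b c).2.2 + 1 = deg b.2 + deg c.2].
Proof.
case: b => k lam; case: c => l th; rewrite /is_basis /=.
case/and3P => hk1 hkn /eqP hsl; case/and3P => hl1 hln /eqP hst.
case: (ltnP l k) => hlk.
- rewrite /lamj /= => hnz.
  have hpos : (0 < nth 0 lam l.-1 + nth 0 th l.-1)%N.
    by move: hnz; case: (nth 0 lam l.-1) => //= x _; lia.
  have [hd hw] := @ms_sums lam th l.-1 k.-1 ltac:(lia) ltac:(lia) ltac:(lia) hpos.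
  rewrite /mon_shift; split.
  + by rewrite /is_basis /= size_mkseq hk1 hkn eqxx.
  + rewrite /WD /=; lia.
  + by [].
- case: (ltnP k l) => hkl; last first.
  have -> : l = k by apply/eqP; rewrite eqn_leq hlk hkl.
  by [].
  rewrite /lamj /= => hnz.
  have hpos : (0 < nth 0 lam k.-1 + nth 0 th k.-1)%N.
    by move: hnz; case: (nth 0 th k.-1) => //= x _; lia.
  have [hd hw] := @ms_sums lam th k.-1 l.-1 ltac:(lia) ltac:(lia) ltac:(lia) hpos.
  rewrite /mon_shift; split.
  + by rewrite /is_basis /= size_mkseq hl1 hln eqxx.
  + rewrite /WD /=; lia.
  + by [].
Qed.

End MC.
Import MC.

Module MD.
Set Implicit Arguments. Unset Strict Implicit. Unset Printing Implicit Defensive.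

Lemma WD_ge0 n b : is_basis n b -> (0 <= WD n b)%R.
Proof.
case: b => k lam; case/and3P => /= h1 h2 /eqP h3; have := wt_ge_deg lam.
rewrite /WD /=; lia.
Qed.

Lemma WD_small n b : is_basis n b -> (deg b.2 <= 1)%N -> (WD n b + Posz (deg b.2) <= Posz n.-1)%R.
Proof.
case: b => k lam; case/and3P => /= h1 h2 /eqP h3 hd; have := wt_le lam.
rewrite h3 /WD /= => hw.
have : (deg lam = 0 \/ deg lam = 1)%N by lia.
case=> hd'; rewrite hd' in hw *; lia.
Qed.

Local Open Scope ring_scope.

Lemma N_WD n i b : (3 <= n)%N -> Nset n i b ->
  WD n b <= Posz n.-1 /\ ((1 <= deg b.2)%N -> WD n b <= Posz n.-1 - 1).
Proof.
move=> hn [hb [A [hA1 [hA2 hlev]]]].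
have w0 := WD_ge0 hb.
case: (leqP (deg b.2) 1) => hd.
  have := WD_small hb hd; split; lia.
have h0 := hh_ge0 hn hA1; have hle := hh_le A hn.
move: hlev; rewrite /lev => hlev.
have : WD n b < Posz n.-1 by nia.
split; lia.
Qed.

Lemma fwd n (j : int) b c : (3 <= n)%N -> Nset n j b -> Nset n (j - 1) c ->
  (brb b c).1 != 0 -> Nset n (j - 1) (brb b c).2.
Proof.
move=> hn Nb Nc hnz.
have [wbm wbm1] := N_WD hn Nb; have [wcm wcm1] := N_WD hn Nc.
case: Nb => hb [A [hA1 [hA2 levb]]]; case: Nc => hc [C [hC1 [hC2 levc]]].
have [hr hWD hdeg] := brb_grade hb hc hnz.
have wr0 := WD_ge0 hr.
have wb0 := WD_ge0 hb; have wc0 := WD_ge0 hc.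
move: levb levc; rewrite /lev => levb levc.
split=> //.
set r := (brb b c).2 in hr hWD hdeg wr0 *.
rewrite hWD in wr0.
set wb := WD n b in wbm wbm1 levb hWD wr0 wb0 *.
set wc := WD n c in wcm wcm1 levc hWD wr0 wc0 *.
set m := Posz n.-1 in wbm wbm1 wcm wcm1 hWD wr0 *.
have hAm := hh_le A hn; have hCm := hh_le C hn.
have hA0 := hh_ge0 hn hA1; have hC0 := hh_ge0 hn hC1.
set hA := hh n A in hAm hA0 levb *; set hC := hh n C in hCm hC0 levc *.
case: (lerP hA hC) => hAC.
- exists C; split=> //; split=> //.
  rewrite /lev hWD.
  have p1 : 0 <= (hC - hA) * (m - wb) by apply: mulr_ge0; lia.
  lia.
- have hCA : C < A.
    case: (ltrP C A) => // hAC'; have := hh_mono hn hAC'; rewrite -/hA -/hC; lia.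
  exists (A - 1); split; first lia; split; first lia.
  have hp1 := hh_pred A hn; have hp2 : hh n (A - 1) <= hA by apply: hh_mono; lia. 
  have hp3 : hh n C <= hh n (A - 1) by apply: hh_mono; lia.
  rewrite -/hA -/hC in hp1 hp2 hp3.
  rewrite /lev hWD.
  set h' := hh n (A - 1) in hp1 hp2 hp3 *.
  have q1 : 0 <= (hA - h') * wb by apply: mulr_ge0; lia.
  have q2 : 0 <= h' * (m - wc) by apply: mulr_ge0; lia.
  case: (leqP (deg c.2) 0) => hdc.
    lia.
  have wcm2 := wcm1 hdc.
  have q3 : 0 <= hC * (m - wc) by apply: mulr_ge0; lia.
  case: (lerP (hC + 1) h') => hh'.
    have q4 : 0 <= (h' - hC - 1) * (m - wc) by apply: mulr_ge0; lia.
    lia.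
  have e1 : h' = hC by lia.
  have e2 : h' = hA - 1 by lia.
  lia.
Qed.

End MD.
Import MD.

Module ME.
Set Implicit Arguments. Unset Strict Implicit. Unset Printing Implicit Defensive.

Lemma brb_lt k lam l th : (l < k)%N ->
  brb (k, lam) (l, th) = (Posz (lamj lam l), (k, mon_shift lam th l k.-1)).
Proof. by move=> h; rewrite /brb h. Qed.

Lemma brb_gt k lam l th : (k < l)%N ->
  brb (k, lam) (l, th) = ((- Posz (lamj th k))%R, (l, mon_shift lam th k l.-1)).
Proof. by move=> h; rewrite /brb ltnNge (ltnW h) /= h. Qed.

Definition cw (g l : nat) : bas :=
  (l.+1, mkseq (fun t => (t == 0)%N * g.-1 + (t == l.-1)%N) l).

Lemma cw_props n g l : (1 <= l)%N -> (1 <= g)%N -> (l.+1 <= n)%N ->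
  [/\ is_basis n (cw g l), deg (cw g l).2 = g,
      WD n (cw g l) = (Posz n.-1 - 1)%R & (1 <= nth 0 (cw g l).2 l.-1)%N].
Proof.
move=> hl hg hln.
have hs : size (cw g l).2 = l by rewrite size_mkseq.
have hdeg : deg (cw g l).2 = g.
  rewrite (deg_ext (eq_leq hs)).
  rewrite (eq_bigr (fun i : 'I_l => (nat_of_ord i == 0)%N * g.-1 + (nat_of_ord i == l.-1)%N * 1)); last first.
    by move=> i _; rewrite nth_mkseq // muln1.
  rewrite big_split /= (sum_ind (fun _ => g.-1)) ?(sum_ind (fun _ => 1)) //; lia.
split=> //.
- by rewrite /is_basis /= size_mkseq eqxx andbT; lia.
- have hwt : wt (cw g l).2 = g.-1 + l.
    rewrite (wt_ext (eq_leq hs)).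
    rewrite (eq_bigr (fun i : 'I_l => (nat_of_ord i == 0)%N * g.-1 + (nat_of_ord i == l.-1)%N * i.+1)); last first.
      move=> i _; rewrite nth_mkseq // mulnDr.
      by case: eqP => [e1|_]; case: eqP => [e2|_] /=; rewrite ?e1 /=; lia.
    rewrite big_split /= (sum_ind (fun _ => g.-1)) ?(sum_ind (fun i => i.+1)) //; lia.
  rewrite /WD hwt hdeg /=; lia.
- rewrite nth_mkseq; last lia.
  rewrite eqxx; lia.
Qed.

End ME.
Import ME.

Module MF.
Set Implicit Arguments. Unset Strict Implicit. Unset Printing Implicit Defensive.

Local Open Scope ring_scope.

Lemma notN_lev n j b : is_basis n b -> ~ Nset n j b ->
  forall j', -1 <= j' -> j' <= j -> j' < lev n j' b.
Proof.
move=> hb hN j' h1 h2; case: (ltrP j' (lev n j' b)) => // h3.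
by exfalso; apply: hN; split=> //; exists j'.
Qed.

Lemma key_notN n (j : int) b r : (3 <= n)%N -> 1 <= j -> 
  (forall j', -1 <= j' -> j' <= j -> j' < lev n j' b) ->
  WD n r = WD n b - 1 -> Posz (deg r.2) = Posz (deg b.2) + hh n j - 1 ->
  ~ Nset n (j - 1) r.
Proof.
move=> hn hj nb hw hd [_ [j' [h1 [h2 h3]]]].
move: h3; rewrite /lev hw hd => h3.
have l1 := nb j' h1 ltac:(lia); move: l1; rewrite /lev => l1.
have m1 : hh n j' <= hh n j by apply: hh_mono; lia.
have m2 : hh n j' <= hh n (j' + 1) by apply: hh_mono; lia.
have m3 : hh n (j' + 1) <= hh n j by apply: hh_mono; lia.
case: (lerP (hh n j) (hh n j')) => e.
- have e1 : hh n j' = hh n j by lia.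
  have e2 : hh n (j' + 1) = hh n j by lia.
  have l2 := nb (j' + 1) ltac:(lia) ltac:(lia); move: l2; rewrite /lev e2 => l2.
  rewrite e1 in h3; lia.
- lia.
Qed.

End MF.
Import MF.

Module MG.
Set Implicit Arguments. Unset Strict Implicit. Unset Printing Implicit Defensive.

Local Open Scope ring_scope.

Lemma deg_head lam : (forall i, (1 <= i)%N -> nth 0 lam i = 0%N) -> deg lam = nth 0%N lam 0%N.
Proof.
case: lam => [|x l] z //=.
rewrite (deg_ext (leqnn _)) big1 ?addn0 // => i _; exact: (z i.+1).
Qed.

Lemma conv n (j : nat) b : (3 <= n)%N -> is_basis n b -> ~ Nset n (Posz j) b ->
  exists c, [/\ Nset n (Posz j - 1) c, (brb b c).1 != 0 & ~ Nset n (Posz j - 1) (brb b c).2].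
Proof.
move=> hn hb hN.
have nb := notN_lev hb hN.
have hd2 : (2 <= deg b.2)%N.
  have := nb 0 ltac:(lia) ltac:(lia); rewrite /lev hh_0 // mul0r add0r; lia.
case: b hb hN nb hd2 => k lam hb hN nb hd2.
have [hk1 hkn hs] : [/\ (1 <= k)%N, (k <= n)%N & size lam = k.-1].
  by case/and3P: hb => ? ? /eqP.
case: j hN nb => [|j] hN nb.
- case: (boolP [exists i : 'I_(size lam), (0 < nth 0 lam i)%N]) => [|/existsPn hall]; last first.
    move: hd2; rewrite /= (deg_ext (leqnn _)) big1 // => i _.
    by have := hall i; rewrite lt0n negbK => /eqP.
  case/existsP => i hi.
  have hik : (i.+1 < k)%N by have := ltn_ord i; lia.
  exists (i.+1, nseq i 0%N).
  have hc : is_basis n (i.+1, nseq i 0%N) by rewrite /is_basis /= size_nseq eqxx andbT; lia.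
  have dc : deg (nseq i 0%N) = 0%N by rewrite /deg sumn_nseq.
  have hnz : (brb (k, lam) (i.+1, nseq i 0%N)).1 != 0 by rewrite brb_lt //= /lamj /=; lia.
  split=> //.
    split=> //; exists (-1); split=> //; split=> //; rewrite /lev hh_m1 // mul0r dc; lia.
  have [_ _ hdr] := brb_grade hb hc hnz.
  move=> [_ [j' [h1 [h2 h3]]]].
  have ej : j' = -1 by lia.
  move: h3; rewrite ej /lev hh_m1 // mul0r /=; rewrite dc in hdr; move: hd2 hdr => /= hd2 hdr; lia.
- set g := hh n (Posz j.+1).
  have g1 : 1 <= g by apply: hh_pos; lia.
  have [gn hg] : exists gn : nat, g = Posz gn.
    by case E: g => [gn|gn]; [exists gn | rewrite E in g1].
  have gn1 : (1 <= gn)%N by lia.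
  have cwN : forall l, (1 <= l)%N -> (l.+1 <= n)%N -> Nset n (Posz j.+1 - 1) (cw gn l).
    move=> l hl hln; have [hc dc wc _] := cw_props hl gn1 hln.
    split=> //; exists ((Posz gn - 1) * Posz n.-1).
    have hb2 := @hh_block n (Posz gn) hn ltac:(lia).
    have hbl := @hh_blockle n (Posz j.+1) hn; rewrite -/g hg in hbl.
    split; first nia.
    split; first lia.
    rewrite /lev hb2 wc dc; lia.
  have fin : forall l, (1 <= l)%N -> (l.+1 <= n)%N ->
      (brb (k, lam) (cw gn l)).1 != 0 -> ~ Nset n (Posz j.+1 - 1) (brb (k, lam) (cw gn l)).2.
    move=> l hl hln hnz; have [hc dc wc _] := cw_props hl gn1 hln.
    have [hr wr dr] := brb_grade hb hc hnz.
    apply: (key_notN hn _ nb).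
    - lia.
    - rewrite wr wc; lia.
    - rewrite -/g hg; rewrite dc in dr; lia.
  case: (boolP [exists i : 'I_(k.-1), (0 < i)%N && (0 < nth 0 lam i)%N]).
  + case/existsP => i /andP [hi0 hi].
    have hik : (i.+1 < k)%N by have := ltn_ord i; lia.
    have hnz : (brb (k, lam) (cw gn i)).1 != 0 by rewrite /cw brb_lt //= /lamj /=; lia.
    exists (cw gn i); split=> //; [apply: cwN; lia | apply: fin => //; lia].
  + move/existsPn => hall.
    case: (ltnP k n) => hkn'.
    * have [_ _ _ hth] := cw_props hk1 gn1 hkn'.
      have hnz : (brb (k, lam) (cw gn k)).1 != 0.
        by rewrite /cw brb_gt //= /lamj; move: hth; rewrite /cw /=; lia.
      exists (cw gn k); split=> //; [apply: cwN; lia | apply: fin => //; lia].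
    * have ekn : k = n by lia.
      have z : forall i, (1 <= i)%N -> nth 0 lam i = 0%N.
        move=> i hi; case: (ltnP i k.-1) => hik.
          by have := hall (Ordinal hik); rewrite /= hi /= -leqNgt leqn0 => /eqP.
        by rewrite nth_default // hs.
      have hdeg0 : deg lam = nth 0%N lam 0%N by apply: deg_head.
      have hwt : wt lam = deg lam.
        rewrite (wt_ext (leqnn _)) (deg_ext (leqnn _)); apply: eq_bigr => i _.
        case: (posnP i) => [->|hi]; first by rewrite mul1n.
        by rewrite z // muln0.
      have wb0 : WD n (k, lam) = 0 by rewrite /WD /= hwt ekn; lia.
      have hc : is_basis n (1%N, [::]) by rewrite /is_basis /=; lia.
      have hnz : (brb (k, lam) (1%N, [::])).1 != 0.
        rewrite brb_lt /lamj /=; [move: hd2; rewrite /= hdeg0; lia | lia].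
      exists (1%N, [::]); split=> //.
        split=> //; exists (-1); split=> //; split; first lia.
        by rewrite /lev hh_m1 // mul0r.
      have [hr wr dr] := brb_grade hb hc hnz.
      move=> [_ [j' [h1 [h2 h3]]]].
      have wc : WD n (1%N, [::]) = Posz n.-1.
        rewrite /WD /wt /deg /= big_ord0; lia.
      have wr0 : WD n (brb (k, lam) (1%N, [::])).2 = 0 by rewrite wr wb0 wc; lia.
      move: h3; rewrite /lev wr0 mulr0.
      have := nb (Posz j.+1) ltac:(lia) ltac:(lia); rewrite /lev wb0 mulr0.
      move: dr; rewrite /deg /= => dr; lia.
Qed.

End MG.
Import MG.


Module ModMain.
Local Open Scope ring_scope.

Lemma coef_filter s e : coef [seq p <- s | p.1 != 0] e = coef s e.
Proof.
rewrite /coef big_filter_cond big_mkcond [RHS]big_mkcond /=.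
apply: eq_bigr => p _; case: eqP => [->|_]; by case: (p.2 == e).
Qed.

End ModMain.
Import ModMain.

Theorem proposition3p3 (n j : nat) (hn : 3 <= n) :
  forall b : bas, Nset n (Posz j) b <-> normB n (Nset n (Posz j - 1)%R) b.
Proof.
move=> b; split.
- move=> Nb; split; first by case: Nb.
  move=> t ht; exists [seq p <- brs b t | p.1 != 0%R]; split; last first.
    by move=> e; rewrite coef_filter.
  move=> p; rewrite mem_filter => /andP [hp0 /mapP [q hq hpq]].
  rewrite hpq /=; rewrite hpq /= in hp0.
  apply: fwd => //; first exact: ht.
  by apply: contra hp0 => /eqP ->; rewrite GRing.mulr0.
- move=> [hb hnorm].
  case: (classic (Nset n (Posz j) b)) => // hN; exfalso.
  have [c [Nc hnz hr]] := conv hn hb hN.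
  have [|t' [ht' hco]] := hnorm [:: (1%R, c)].
    by move=> p; rewrite inE => /eqP ->.
  have := hco (brb b c).2.
  rewrite /coef /brs /= big_cons big_nil /= eqxx GRing.mul1r GRing.addr0.
  case: (boolP (has (fun p => p.2 == (brb b c).2) t')) => [/hasP [p hp /eqP hpr] | /hasPn h0].
    by move=> _; apply: hr; rewrite -hpr; exact: ht' p hp.
  rewrite big1_seq; last by move=> p /andP [hpe hp]; move: (h0 p hp); rewrite hpe.
  by move=> e; move: hnz; rewrite -e eqxx.
Qed.
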